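(* In the setting described in the context, let $\gamma \in (0,\frac12)$, $\lambda_0 > 1$, $0 \leq k \leq q$, and $x \in \Omega$. Then there exist nonnegative real numbers $a_0,\dots,a_k$ with $\sum_{i=0}^k a_i = 1$ and $d\hat u_k = \sum_{i=0}^k a_i \, du_i$ at $x$. Moreover, $a_i = 0$ for every $0 \leq i \leq k$ satisfying $u_i(x) < \hat u_k(x) - 2k\lambda_i^{-1}$.
   Context: $n\ge 3$, $u_0,\dots,u_q$ are non-constant linear (affine) functions on $\mathbb{R}^n$, and $\Omega=\bigcap_{m=0}^q\{u_m\le 0\}$ is a compact convex polytope with non-empty interior. Fix a smooth even function $\eta:\mathbb{R}\to\mathbb{R}$ with $\eta(t)=|t|$ for $|t|\ge \frac12$ and $\eta''\ge 0$ everywhere. For $\gamma\in(0,\frac12)$ and $\lambda_0>1$ set $\lambda_k=\gamma^{-k}\lambda_0$ for $1\le k\le q$. Define $\hat u_0=u_0$ and, for $1\le k\le q$, $\hat u_k=\frac12\big(\hat u_{k-1}+u_k+\lambda_k^{-1}\eta(\lambda_k(\hat u_{k-1}-u_k))\big)$. *)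

(* Defs.v *)
From HB Require Import structures.
From mathcomp Require Import all_boot all_order all_algebra.
From mathcomp Require Import all_classical all_reals all_analysis.
Set Implicit Arguments. Unset Strict Implicit. Unset Printing Implicit Defensive.
Import Order.TTheory GRing.Theory Num.Theory.
Import numFieldNormedType.Exports.
Local Open Scope classical_set_scope.
Local Open Scope ring_scope.

Definition smooth_fun (R : realType) (f : R -> R) : Prop :=
  forall (m : nat) (t : R), derivable (derive1n m f) t 1.

Definition nonconst_affine (R : realType) (n : nat) (u : 'rV[R]_n -> R) : Prop :=
  exists (c : 'rV[R]_n) (b : R), c != 0 /\
    forall x : 'rV[R]_n, u x = \sum_(j < n) c 0 j * x 0 j + b.

Definition lam (R : realType) (gamma lam0 : R) (k : nat) : R := lam0 / gamma ^+ k.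

Fixpoint hatu (R : realType) (n : nat) (u : nat -> 'rV[R]_n -> R) (eta : R -> R)
    (gamma lam0 : R) (k : nat) : 'rV[R]_n -> R :=
  match k with
  | 0 => u 0
  | k'.+1 => fun x =>
      let h := hatu u eta gamma lam0 k' x in
      let l := lam gamma lam0 k'.+1 in
      2^-1 * (h + u k'.+1 x + l^-1 * eta (l * (h - u k'.+1 x)))
  end.

Definition Omega (R : realType) (n q : nat) (u : nat -> 'rV[R]_n -> R) : set 'rV[R]_n :=
  [set x | forall m, (m <= q)%N -> u m x <= 0].

(* Main.v *)
Require Import Defs.
From HB Require Import structures.
From mathcomp Require Import all_boot all_order all_algebra.
From mathcomp Require Import all_classical all_reals all_analysis.
From mathcomp Require Import lra ring.
Import Order.TTheory GRing.Theory Num.Theory.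
Import numFieldNormedType.Exports.
Local Open Scope classical_set_scope.
Local Open Scope ring_scope.

Section Eta.
Variables (R : realType) (eta : R -> R).
Hypotheses (sm : smooth_fun eta) (ev : forall t, eta (- t) = eta t)
  (ab : forall t, 2^-1 <= `|t| -> eta t = `|t|)
  (cv : forall t, 0 <= derive1n 2 eta t).

Lemma eta_der t : derivable eta t 1.
Proof. by have := sm 0 t; rewrite derive1n0. Qed.

Lemma eta_der2 t : derivable (derive1 eta) t 1.
Proof. by have := sm 1 t; rewrite derive1n1. Qed.

Lemma eta'_mono s t : s <= t -> derive1 eta s <= derive1 eta t.
Proof.
move=> st; apply: (@ger0_derive1_ndecr _ _ s t) => //.
- by move=> y _; exact: eta_der2.
- by move=> y _; have := cv y; rewrite derive1nS derive1n1.
- apply: derivable_within_continuous => y _; exact: eta_der2.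
Qed.

Lemma eta'_pos t : 2^-1 < t -> derive1 eta t = 1.
Proof.
move=> ht; rewrite derive1E (@near_eq_derive _ _ _ _ id) ?derive_id //.
have := lt_nbhsr ht; apply: filterS => y hy.
rewrite ab ?gtr0_norm //; try lra; rewrite gtr0_norm; lra.
Qed.

Lemma eta'_neg t : t < - 2^-1 -> derive1 eta t = -1.
Proof.
move=> ht; rewrite derive1E (@near_eq_derive _ _ _ _ -%R).
  by rewrite (@derive_val _ _ _ _ _ _ _ (@is_deriveNid R R t 1)).
have := lt_nbhsl ht; apply: filterS => y hy.
rewrite ab ?ltr0_norm //; try lra; rewrite ltr0_norm; lra.
Qed.

Lemma eta'_bnd t : -1 <= derive1 eta t <= 1.
Proof.
apply/andP; split.
  rewrite -(@eta'_neg (Num.min t (-1))); first by apply: eta'_mono; rewrite ge_min lexx.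
  rewrite gt_min; apply/orP; right; lra.
rewrite -(@eta'_pos (Num.max t 1)); first by apply: eta'_mono; rewrite le_max lexx.
rewrite lt_max; apply/orP; right; lra.
Qed.

Lemma eta_le s : s <= 2^-1 -> eta s + s <= 1.
Proof.
move=> hs.
have h1 : eta (2^-1) = 2^-1 by rewrite ab ger0_norm //; lra.
have : eta s + s <= eta 2^-1 + 2^-1.
  apply: (@ger0_derive1_ndecr _ (fun y => eta y + y) s 2^-1) => //.
  - by move=> y _; apply: derivableD; [exact: eta_der| exact: derivable_id].
  - move=> y _; rewrite derive1E deriveD; [|exact: eta_der| exact: derivable_id].
    rewrite derive_id -derive1E; have := eta'_bnd y; lra.
  - apply: derivable_within_continuous => y _.
    by apply: derivableD; [exact: eta_der| exact: derivable_id].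
lra.
Qed.


Lemma step_diff (V : normedModType R) (h w : V -> R) (l : R) x :
  differentiable h x -> differentiable w x ->
  let F := fun y => 2^-1 * (h y + w y + l^-1 * eta (l * (h y - w y))) in
  differentiable F x /\ forall v, 'd F x v =
    2^-1 * ('d h x v + 'd w x v + l^-1 * ((l * ('d h x v - 'd w x v)) *
       derive1 eta (l * (h x - w x)))).
Proof.
move=> dh dw F.
have eF : F = 2^-1 *: (h + w + l^-1 *: (eta \o (l *: (h - w)))).
  by apply/funext => y.
have dg : differentiable (l *: (h - w)) x.
  by apply: differentiableZ; apply: differentiableB.
have de : differentiable eta ((l *: (h - w)) x).
  exact/derivable1_diffP/eta_der.
have dc : differentiable (eta \o (l *: (h - w))) x.
  exact: differentiable_comp.
rewrite eF; split.
  apply: differentiableZ; apply: differentiableD; first exact: differentiableD.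
  exact: differentiableZ.
move=> v.
have dS : differentiable (h + w + l^-1 *: (eta \o (l *: (h - w)))) x.
  apply: differentiableD; first exact: differentiableD.
  exact: differentiableZ.
have := diffZ (2^-1) dS.
move=> ->.
have dhw : differentiable (h + w) x by exact: differentiableD.
have dZ : differentiable (l^-1 *: (eta \o (l *: (h - w)))) x by exact: differentiableZ.
rewrite [LHS]/=.
set RHS := (2^-1 * _).
have E1 := congr1 (fun f => f v) (diffD dhw dZ).
rewrite E1 /=.
have E2 := congr1 (fun f => f v) (diffD dh dw).
rewrite E2 /=.
have E3 := congr1 (fun f => f v) (diffZ (l^-1) dc).
rewrite E3 /=.
have E4 := congr1 (fun f => f v) (diff_comp dg de).
rewrite E4 /=.
have dB : differentiable (h - w) x by exact: differentiableB.
have E5 := congr1 (fun f => f v) (diffZ l dB).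
rewrite E5 /=.
have E6 := congr1 (fun f => f v) (diffB dh dw).
rewrite E6 /=.
have E7 := congr1 (fun f => f (l *: ('d h x v - 'd w x v))) (deriv1E (eta_der ((l *: (h - w)) x))).
rewrite E7 /=.
reflexivity.
Qed.
End Eta.


Lemma lam_inv_le (R : realType) (gamma lam0 : R) i j :
  0 < gamma -> gamma <= 1 -> 0 < lam0 -> (i <= j)%N ->
  (lam gamma lam0 j)^-1 <= (lam gamma lam0 i)^-1.
Proof.
move=> g0 g1 l0 ij; rewrite /lam !invf_div ler_pM2r ?invr_gt0 //.
exact: ler_wiXn2l (ltW g0) g1 _ _ ij.
Qed.

Lemma lam_inv_gt0 (R : realType) (gamma lam0 : R) i :
  0 < gamma -> 0 < lam0 -> 0 < (lam gamma lam0 i)^-1.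
Proof. by move=> g0 l0; rewrite /lam invf_div divr_gt0 // exprn_gt0. Qed.

Lemma affine_diff (R : realType) n (f : 'rV[R]_n -> R) (c : 'rV[R]_n) b :
  (forall y, f y = \sum_(j < n) c 0 j * y 0 j + b) -> forall x, differentiable f x.
Proof.
move=> hf x.
have -> : f = (\sum_(j < n) (fun y : 'rV[R]_n => c 0 j * y 0 j)) + cst b.
  by apply/funext => y; rewrite hf fct_sumE.
apply: differentiableD; last exact: differentiable_cst.
apply: differentiable_sum => j.
have -> : (fun y : 'rV[R]_n => c 0 j * y 0 j) = c 0 j *: (fun y : 'rV[R]_n => y 0 j).
  by apply/funext.
apply: differentiableZ; exact: differentiable_coord.
Qed.

Theorem lemma2p9 (R : realType) (n q : nat) (u : nat -> 'rV[R]_n -> R)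
    (eta : R -> R) (gamma lam0 : R) (k : nat) (x : 'rV[R]_n) :
  (3 <= n)%N ->
  (forall m, (m <= q)%N -> nonconst_affine (u m)) ->
  compact (Omega q u) ->
  (Omega q u)° !=set0 ->
  smooth_fun eta ->
  (forall t, eta (- t) = eta t) ->
  (forall t, 2^-1 <= `|t| -> eta t = `|t|) ->
  (forall t, 0 <= derive1n 2 eta t) ->
  0 < gamma < 2^-1 ->
  1 < lam0 ->
  (k <= q)%N ->
  x \in Omega q u ->
  exists a : nat -> R,
    (forall i, (i <= k)%N -> 0 <= a i) /\
    \sum_(i < k.+1) a i = 1 /\
    differentiable (hatu u eta gamma lam0 k) x /\
    (forall v : 'rV[R]_n,
       'd (hatu u eta gamma lam0 k) x v = \sum_(i < k.+1) a i * 'd (u i) x v) /\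
    (forall i, (i <= k)%N ->
       u i x < hatu u eta gamma lam0 k x - 2 * k%:R * (lam gamma lam0 i)^-1 ->
       a i = 0).
Proof.
move=> _ haff _ _ sm ev ab cv /andP[g0 g1] l1 hk _.
have du : forall m, (m <= q)%N -> differentiable (u m) x.
  by move=> m /haff [c [b [_ hc]]]; exact: affine_diff hc x.
have g1' : gamma <= 1 by lra.
have l0 : 0 < lam0 by lra.
elim: k hk => [|k IH] hk.
  exists (fun _ => 1); split => //; split; first by rewrite big_ord1.
  split; first exact: du.
  split; first by move=> v; rewrite big_ord1 mul1r.
  by move=> i; rewrite leqn0 => /eqP ->; rewrite mulr0 mul0r subr0 /= ltxx.
have [a [ha0 [hsum [hdiff [hd hz]]]]] := IH (ltnW hk).
set h := hatu u eta gamma lam0 k.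
set w := u k.+1.
set l := lam gamma lam0 k.+1.
set s := l * (h x - w x).
pose e : R := derive1 eta s.
have [dF eqF] : differentiable (hatu u eta gamma lam0 k.+1) x /\
    forall v, 'd (hatu u eta gamma lam0 k.+1) x v =
    2^-1 * ('d h x v + 'd w x v + l^-1 * ((l * ('d h x v - 'd w x v)) * e)).
  exact: (@step_diff R eta sm _ h w l x hdiff (du _ hk)).
have /andP[he1 he2] : -1 <= e <= 1 := @eta'_bnd _ _ sm ab cv s.
have il0 : 0 < l^-1 by exact: lam_inv_gt0.
have ln0 : l != 0 by rewrite -invr_eq0 gt_eqF.
have Fx : hatu u eta gamma lam0 k.+1 x = 2^-1 * (h x + w x + l^-1 * eta s) by [].
exists (fun i => if (i <= k)%N then 2^-1 * (1 + e) * a i else 2^-1 * (1 - e)).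
split.
  move=> i _; case: ifP => hi; last lra.
  by apply: mulr_ge0; [lra|exact: ha0].
split.
  rewrite big_ord_recr /= ltnn.
  rewrite (eq_bigr (fun i : 'I_k.+1 => 2^-1 * (1 + e) * a i)); last first.
    by move=> i _ /=; rewrite -ltnS ltn_ord.
  rewrite -mulr_sumr hsum; lra.
split; first exact: dF.
split.
  move=> v; rewrite eqF big_ord_recr /= ltnn.
  rewrite (eq_bigr (fun i : 'I_k.+1 => 2^-1 * (1 + e) * (a i * 'd (u i) x v))); last first.
    by move=> i _ /=; rewrite -ltnS ltn_ord mulrA.
  rewrite -mulr_sumr -hd mulrA (mulrA l^-1 l) mulVf //.
  rewrite /w; ring.
move=> i; rewrite leq_eqVlt => /orP[/eqP ->|hi].
  rewrite ltnn => hlt.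
  have K1 : 1 <= (k.+1)%:R :> R by rewrite ler1n.
  have : 4 < s + eta s.
    move: hlt; rewrite Fx -/w -/l /s => hlt.
    have hh : l^-1 * (l * (h x - w x)) = h x - w x by rewrite mulrA mulVf // mul1r.
    nra.
  move=> hse.
  have : 2^-1 < s.
    rewrite ltNge; apply/negP => /(@eta_le _ _ sm ab cv _); lra.
  move=> /(@eta'_pos _ _ ab _) he'; rewrite /e he'; lra.
rewrite ltnS in hi; rewrite hi => hlt.
have [hlt2|hge] := ltP (u i x) (h x - 2 * k%:R * (lam gamma lam0 i)^-1).
  by rewrite hz // mulr0.
have Li := @lam_inv_le _ gamma lam0 i k.+1 g0 g1' l0 (leqW hi).
have : 4 < eta s - s.
  move: hlt; rewrite Fx -/w -/l /s => hlt.
  have hh : l^-1 * (l * (h x - w x)) = h x - w x by rewrite mulrA mulVf // mul1r.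
  rewrite -/l in Li.
  rewrite -[k.+1%:R]natr1 in hlt.
  have key : 0 < l^-1 * (eta s - s - 4).
    rewrite /s mulrBr mulrBr hh; lra.
  by move: key; rewrite /s pmulr_rgt0 //; lra.
move=> hse.
have : - s > 2^-1.
  rewrite ltNge; apply/negP => /(@eta_le _ _ sm ab cv _); rewrite ev; lra.
move=> hs; rewrite /e (@eta'_neg _ _ ab _); [lra|lra].
Qed.
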